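(* Consider the parallel randomized coordinate descent method (Algorithm 1): given an $\alpha$-proper distribution $P$ and $y^{(0)}\in\mathcal{B}$, at each iteration $k$ draw $C_{i_k}\sim P$ independently of the past; for every $r\in C_{i_k}$ set $y_r^{(k+1)}=\Pi_{\mathcal{B}_r,\theta^P_r}\big(y_r^{(k)}-(\theta^P_r)^{-1}\odot\nabla_rg(y^{(k)})\big)$, and set $y_r^{(k+1)}=y_r^{(k)}$ for $r\notin C_{i_k}$. Let $g^*=\min_{y\in\mathcal{B}}g(y)$. Then for all $k\ge0$, $$\mathbb{E}\Big[g(y^{(k)})-g^*+\tfrac12d^2_{\theta^P}(y^{(k)},\Xi)\Big]\le\Big[1-\frac{4\alpha}{N\|\theta^P\|_{1,\infty}+2}\Big]^k\Big[g(y^{(0)})-g^*+\tfrac12d^2_{\theta^P}(y^{(0)},\Xi)\Big].$$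
   Context: Let $N,R$ be positive integers; $F_r:2^{[N]}\to\mathbb{R}$ ($r\in[R]$) are submodular with $F_r(\emptyset)=0$, base polytopes $\mathcal{B}_r=\{u\in\mathbb{R}^N:\sum_{i\in S}u_i\le F_r(S)\ \forall S,\ \sum_iu_i=F_r([N])\}$, Lovász extensions $f_r(x)=\max_{u\in\mathcal{B}_r}\langle u,x\rangle$; $\mathcal{B}=\mathcal{B}_1\times\cdots\times\mathcal{B}_R$; $A:(\mathbb{R}^N)^R\to\mathbb{R}^N$, $Ay=\sum_ry_r$; $g(y)=\frac12\|Ay\|_2^2$, with block gradient $\nabla_rg(y)=Ay$. Element $i$ is incident to $F_r$ if $F_r(S\cup\{i\})\ne F_r(S)$ for some $S\subseteq[N]\setminus\{i\}$; $S_r$ is the set of elements incident to $F_r$ (points of $\mathcal{B}_r$ vanish outside $S_r$); assume every $i$ lies in some $S_r$. $\mu^C_i=|\{r\in C:i\in S_r\}|$ for $C\subseteq[R]$. $P$ on subsets of $[R]$ is $\alpha$-proper ($\alpha\in(0,1)$) if $\mathbb{P}_{C\sim P}(r\in C)=\alpha$ for all $r$; $\theta^P_r=\mathbb{E}_{C\sim P}[\mu^C\mid r\in C]$ (only its coordinates in $S_r$, which are $\ge1$, matter). $\odot$ and $(\cdot)^{-1}$ act element-wise. $\|z\|_{2,w}=\sqrt{\sum_iw_iz_i^2}$, $\Pi_{\Omega,w}(u)=\arg\min_{z\in\Omega}\|z-u\|_{2,w}$; $\|y\|_{2,\theta}=\sqrt{\sum_r\|y_r\|^2_{2,\theta_r}}$;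 $\|\theta\|_{1,\infty}=\sum_i\max_{r:i\in S_r}\theta_{r,i}$; $d_\theta(y,\mathcal{K})=\min_{z\in\mathcal{K}}\|y-z\|_{2,\theta}$. $x^*$ is the unique minimizer of $\sum_rf_r(x)+\frac12\|x\|_2^2$ and $\Xi=\{\xi\in\mathcal{B}:A\xi=-x^*\}$ (the set of minimizers of $g$ on $\mathcal{B}$). *)

(* Defs.v *)
From HB Require Import structures.
From mathcomp Require Import all_boot all_order all_algebra.
Set Implicit Arguments. Unset Strict Implicit. Unset Printing Implicit Defensive.
Import Order.TTheory GRing.Theory Num.Theory.
Local Open Scope ring_scope.

Section Defs.
Variables (K : realFieldType) (N nR : nat).

(* vectors in K^N are functions 'I_N -> K; block vectors y = (y_1..y_R) are
   functions 'I_nR -> 'I_N -> K. *)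

Definition submodular (Fr : {set 'I_N} -> K) : Prop :=
  forall A B : {set 'I_N}, Fr (A :|: B) + Fr (A :&: B) <= Fr A + Fr B.

Definition in_base (Fr : {set 'I_N} -> K) (u : 'I_N -> K) : Prop :=
  (forall S : {set 'I_N}, \sum_(i in S) u i <= Fr S) /\ \sum_i u i = Fr setT.

Definition in_Bprod (F : 'I_nR -> {set 'I_N} -> K) (y : 'I_nR -> 'I_N -> K) : Prop :=
  forall r, in_base (F r) (y r).

(* i is incident to F_r, i.e. i \in S_r *)
Definition incident (Fr : {set 'I_N} -> K) (i : 'I_N) : bool :=
  [exists S : {set 'I_N}, (i \notin S) && (Fr (i |: S) != Fr S)].

Definition mu (F : 'I_nR -> {set 'I_N} -> K) (C : {set 'I_nR}) (i : 'I_N) : nat :=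
  #|[set r in C | incident (F r) i]|.

Definition alpha_proper (P : {set 'I_nR} -> K) (alpha : K) : Prop :=
  [/\ 0 < alpha < 1, (forall C, 0 <= P C), \sum_(C : {set 'I_nR}) P C = 1 &
      forall r, \sum_(C : {set 'I_nR} | r \in C) P C = alpha].

Definition theta (F : 'I_nR -> {set 'I_N} -> K) (P : {set 'I_nR} -> K)
  (r : 'I_nR) (i : 'I_N) : K :=
  (\sum_(C : {set 'I_nR} | r \in C) P C * (mu F C i)%:R) / (\sum_(C : {set 'I_nR} | r \in C) P C).

Definition wnorm2 (w z : 'I_N -> K) : K := \sum_i w i * z i ^+ 2.

Definition bnorm2 (th y : 'I_nR -> 'I_N -> K) : K := \sum_r wnorm2 (th r) (y r).

Definition Aop (y : 'I_nR -> 'I_N -> K) (i : 'I_N) : K := \sum_r y r i.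

(* g(y) = 1/2 ||Ay||^2 ; its block gradient is Ay *)
Definition gfun (y : 'I_nR -> 'I_N -> K) : K := 2^-1 * \sum_i Aop y i ^+ 2.

Definition norm1inf (F : 'I_nR -> {set 'I_N} -> K) (th : 'I_nR -> 'I_N -> K) : K :=
  \sum_i \big[Num.max/0]_(r | incident (F r) i) th r i.

Definition is_min (T : Type) (S : T -> Prop) (f : T -> K) (m : K) : Prop :=
  (exists2 x, S x & f x = m) /\ (forall x, S x -> m <= f x).

Definition is_max (T : Type) (S : T -> Prop) (f : T -> K) (m : K) : Prop :=
  (exists2 x, S x & f x = m) /\ (forall x, S x -> f x <= m).

Definition lovasz_value (Fr : {set 'I_N} -> K) (x : 'I_N -> K) (v : K) : Prop :=
  is_max (in_base Fr) (fun u => \sum_i u i * x i) v.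

Definition is_wproj (S : ('I_N -> K) -> Prop) (w u z : 'I_N -> K) : Prop :=
  S z /\ forall z', S z' -> wnorm2 w (fun i => z i - u i) <= wnorm2 w (fun i => z' i - u i).

Definition Xi (F : 'I_nR -> {set 'I_N} -> K) (xstar : 'I_N -> K)
  (xi : 'I_nR -> 'I_N -> K) : Prop :=
  in_Bprod F xi /\ forall i, Aop xi i = - xstar i.

End Defs.

(* Main.v *)
Require Import Defs.
From HB Require Import structures.
From mathcomp Require Import all_boot all_order all_algebra.
From mathcomp Require Import ring lra.
Import Order.TTheory GRing.Theory Num.Theory.
Local Open Scope ring_scope.

Set Implicit Arguments. Unset Strict Implicit. Unset Printing Implicit Defensive.

Section Gen.
Variable K : realFieldType.

Lemma cs_sum (I : finType) (A : pred I) (a : I -> K) :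
  (\sum_(i in A) a i) ^+ 2 <= #|A|%:R * \sum_(i in A) a i ^+ 2.
Proof.
set s := \sum_(i in A) a i; set q := \sum_(i in A) a i ^+ 2.
set n : K := #|A|%:R.
have [n0|n0] := eqVneq #|A| 0%N.
  have -> : s = 0 by rewrite /s big_pred0 // => i; have := card0_eq n0 i; rewrite !inE.
  by rewrite expr2 mul0r /n n0 mul0r.
have np : 0 < n by rewrite /n ltr0n lt0n.
set c := s / n.
have H : 0 <= \sum_(i in A) (a i - c) ^+ 2 by apply: sumr_ge0 => i _; exact: sqr_ge0.
have E : \sum_(i in A) (a i - c) ^+ 2 = q - 2 * c * s + n * c ^+ 2.
  transitivity (\sum_(i in A) (a i ^+ 2 - (2 * c) * a i + c ^+ 2)).
    by apply: eq_bigr => i _; ring.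
  by rewrite big_split /= sumrB -mulr_sumr sumr_const /n [in RHS](mulr_natl (c ^+ 2)).
rewrite E in H.
have cn : c * n = s by rewrite /c divfK // gt_eqF.
have : 0 <= n * (q - 2 * c * s + n * c ^+ 2) by rewrite mulr_ge0 // ltW.
have -> : n * (q - 2 * c * s + n * c ^+ 2) = n * q - s ^+ 2.
  rewrite -cn; ring.
lra.
Qed.

Lemma sumsq_le (I : finType) (A : pred I) (a : I -> K) :
  (forall i, A i -> 0 <= a i) ->
  \sum_(i in A) a i ^+ 2 <= (\sum_(i in A) a i) ^+ 2.
Proof.
move=> H; rewrite expr2 mulr_suml; apply: ler_sum => i Ai.
rewrite expr2; apply: ler_wpM2l; first exact: H.
by rewrite (bigD1 i) //= lerDl; apply: sumr_ge0 => j /andP[/H].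
Qed.

Lemma vi_lemma (X Y : K) :
  (forall t, 0 < t -> t <= 1 -> 0 <= 2 * t * X + t ^+ 2 * Y) -> 0 <= Y -> 0 <= X.
Proof.
move=> H Y0; rewrite leNgt; apply/negP => X0.
have YX : 0 < Y - X by lra.
set t := - X / (Y - X).
have t0 : 0 < t by rewrite /t divr_gt0 // oppr_gt0.
have t1 : t <= 1 by rewrite /t ler_pdivrMr // mul1r; lra.
have tY : t * Y <= - X.
  rewrite /t mulrAC ler_pdivrMr // ler_pM2l; last by rewrite oppr_gt0.
  lra.
have := H t t0 t1.
have -> : 2 * t * X + t ^+ 2 * Y = t * (2 * X + t * Y) by ring.
rewrite pmulr_rge0 //; lra.
Qed.

End Gen.

Set Implicit Arguments. Unset Strict Implicit. Unset Printing Implicit Defensive.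

Section Base.
Variables (K : realFieldType) (N : nat).
Implicit Types (Fr : {set 'I_N} -> K) (u v d : 'I_N -> K) (S T : {set 'I_N}).

Lemma sum_mkset S u : \sum_(i in S) u i = \sum_i (i \in S)%:R * u i.
Proof. by rewrite big_mkcond /=; apply: eq_bigr => i _; case: (i \in S); rewrite ?mul1r ?mul0r. Qed.

Lemma sum_UI S T u :
  \sum_(i in S :|: T) u i + \sum_(i in S :&: T) u i = \sum_(i in S) u i + \sum_(i in T) u i.
Proof.
rewrite !sum_mkset -!big_split /=; apply: eq_bigr => i _.
by rewrite !inE; case: (i \in S); case: (i \in T) => /=; ring.
Qed.

Lemma base_vanish Fr u i : Fr set0 = 0 -> in_base Fr u -> ~~ incident Fr i -> u i = 0.
Proof.
move=> F0 [Hle Hsum] /existsPn Hni.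
have Hc : forall S, i \notin S -> Fr (i |: S) = Fr S.
  by move=> S iS; have := Hni S; rewrite iS /= negbK => /eqP.
have h1 : u i <= 0.
  have := Hle [set i]; rewrite big_set1 -(setU0 [set i]) Hc ?inE // F0 //.
have h2 : 0 <= u i.
  have := Hle (~: [set i]).
  have -> : Fr (~: [set i]) = Fr setT.
    by rewrite -(Hc (~: [set i])) ?inE ?eqxx // setUCr.
  have E : \sum_j u j = u i + \sum_(j in ~: [set i]) u j.
    by rewrite (bigD1 i) //=; congr (_ + _); apply: eq_bigl => j; rewrite !inE.
  rewrite -Hsum E.
  lra.
lra.
Qed.

Lemma base_conv Fr u v (t : K) : in_base Fr u -> in_base Fr v -> 0 <= t <= 1 ->
  in_base Fr (fun i => u i + t * (v i - u i)).
Proof.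
move=> [Hu Su] [Hv Sv] /andP[t0 t1]; split.
  move=> S; rewrite big_split /= -mulr_sumr sumrB.
  have := Hu S; have := Hv S.
  set a := \sum_(i in S) u i; set b := \sum_(i in S) v i => hb ha.
  have : a + t * (b - a) = (1 - t) * a + t * b by ring.
  move=> ->; have : (1 - t) * a <= (1 - t) * Fr S by apply: ler_wpM2l; lra.
  have : t * b <= t * Fr S by apply: ler_wpM2l.
  lra.
by rewrite big_split /= -mulr_sumr sumrB Su Sv subrr mulr0 addr0.
Qed.

Section Tight.
Variables (Fr : {set 'I_N} -> K) (u : 'I_N -> K).
Hypotheses (Fsub : submodular Fr) (F0 : Fr set0 = 0) (uB : in_base Fr u).

Definition tight S := \sum_(i in S) u i == Fr S.

Lemma tightT : tight setT.
Proof. by rewrite /tight; apply/eqP; rewrite -uB.2; apply: eq_bigl => i; rewrite inE. Qed.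

Lemma tight0 : tight set0.
Proof. by rewrite /tight big_set0 F0. Qed.

Lemma tightUI S T : tight S -> tight T -> tight (S :|: T) && tight (S :&: T).
Proof.
move=> /eqP hS /eqP hT.
have e := sum_UI S T u; have s := Fsub S T.
have h1 := uB.1 (S :|: T); have h2 := uB.1 (S :&: T).
rewrite /tight; apply/andP; split; apply/eqP; lra.
Qed.

Lemma tight_bigcup (I : finType) (Q : pred I) (G : I -> {set 'I_N}) :
  (forall i, Q i -> tight (G i)) -> tight (\bigcup_(i | Q i) G i).
Proof.
move=> H; apply: (big_ind tight) => //; first exact: tight0.
by move=> A B hA hB; case/andP: (tightUI hA hB).
Qed.

Lemma tight_bigcap (I : finType) (Q : pred I) (G : I -> {set 'I_N}) :
  (forall i, Q i -> tight (G i)) -> tight (\bigcap_(i | Q i) G i).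
Proof.
move=> H; apply: (big_ind tight) => //; first exact: tightT.
by move=> A B hA hB; case/andP: (tightUI hA hB).
Qed.

Definition mintight i := \bigcap_(T | tight T && (i \in T)) T.

Lemma mintight_tight i : tight (mintight i).
Proof. by apply: tight_bigcap => T /andP[]. Qed.

Lemma mintight_mem i : i \in mintight i.
Proof. by apply/bigcapP => T /andP[]. Qed.

Lemma mintight_sub i T : tight T -> i \in T -> mintight i \subset T.
Proof. by move=> hT iT; apply: bigcap_inf; rewrite hT iT. Qed.

Lemma feasible_dir d :
  \sum_i d i = 0 -> (forall S, tight S -> \sum_(i in S) d i <= 0) ->
  exists2 e : K, 0 < e & forall e', 0 <= e' <= e -> in_base Fr (fun i => u i + e' * d i).
Proof.
move=> Sd Hd.
set M := \sum_i `|d i| + 1.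
have M0 : 0 < M by rewrite /M ltr_wpDl // sumr_ge0 // => i _; exact: normr_ge0.
set m := \big[Num.min/1]_(S | ~~ tight S) (Fr S - \sum_(i in S) u i).
have m0 : 0 < m.
  apply/bigmin_gtP; split => // S nt.
  have := uB.1 S; rewrite /tight in nt; rewrite subr_gt0 lt_neqAle nt => -> //.
exists (m / M); first by rewrite divr_gt0.
move=> e' /andP[e0 e1]; split; last first.
  by rewrite big_split /= -mulr_sumr Sd mulr0 addr0; exact: uB.2.
move=> S; rewrite big_split /= -mulr_sumr.
have [tS|ntS] := boolP (tight S).
  have := uB.1 S; have := Hd S tS.
  move=> h1 h2; have : e' * \sum_(i in S) d i <= 0 by rewrite mulr_ge0_le0.
  lra.
have hm : m <= Fr S - \sum_(i in S) u i by rewrite /m; exact: (@bigmin_le_cond _ _ _ 1 S (fun S => ~~ tight S) (fun S => Fr S - \sum_(i in S) u i) ntS).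
have hdS : \sum_(i in S) d i <= M.
  apply: (le_trans (y := \sum_(i in S) `|d i|)); first by apply: ler_sum => i _; exact: ler_norm.
  rewrite /M; apply: ler_wpDr => //.
  rewrite [X in _ <= X](bigID (fun i => i \in S)) /= lerDl.
  by apply: sumr_ge0 => i _; exact: normr_ge0.
have : e' * \sum_(i in S) d i <= m.
  have [dn|dp] := lerP (\sum_(i in S) d i) 0.
    by apply: (le_trans (mulr_ge0_le0 e0 dn)); exact: ltW.
  apply: (le_trans (y := m / M * M)); last by rewrite divfK // gt_eqF.
  apply: (le_trans (y := m / M * \sum_(i in S) d i)).
    by apply: ler_wpM2r => //; exact: ltW.
  by apply: ler_wpM2l => //; apply: divr_ge0; apply: ltW.
lra.
Qed.

End Tight.
End Base.

Set Implicit Arguments. Unset Strict Implicit. Unset Printing Implicit Defensive.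

Lemma fin_eps (K : realFieldType) (I : finType) (Q : I -> K -> Prop) :
  (forall i, exists2 e, 0 < e & forall e', 0 <= e' <= e -> Q i e') ->
  exists2 e, 0 < e & forall i e', 0 <= e' <= e -> Q i e'.
Proof.
move=> H.
suff : forall s : seq I, exists2 e, 0 < e & forall i, i \in s -> forall e', 0 <= e' <= e -> Q i e'.
  by case/(_ (enum I)) => e e0 He; exists e => // i e' h; apply: He => //; rewrite mem_enum.
elim=> [|a s IH]; first by exists 1.
case: IH => e e0 He.
have [ea ea0 Ha] := H a.
exists (Num.min e ea); first by rewrite lt_min e0 ea0.
move=> i; rewrite inE => /orP[/eqP->|iS] e' /andP[h1 h2].
  by apply: Ha; rewrite h1 /=; apply: (le_trans h2); rewrite ge_min lexx orbT.
by apply: He => //; rewrite h1 /=; apply: (le_trans h2); rewrite ge_min lexx.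
Qed.

Lemma sum_eq1 (K : realFieldType) (N : nat) (a : 'I_N) : \sum_k (k == a)%:R = 1 :> K.
Proof. by rewrite (bigD1 a) //= eqxx big1 ?addr0 // => k /negbTE ->. Qed.

Lemma sum_eq1f (K : realFieldType) (N : nat) (a : 'I_N) (f : 'I_N -> K) :
  \sum_k f k * (k == a)%:R = f a.
Proof. by rewrite (bigD1 a) //= eqxx mulr1 big1 ?addr0 // => k /negbTE ->; rewrite mulr0. Qed.

Lemma sum_eq1S (K : realFieldType) (N : nat) (a : 'I_N) (S : {set 'I_N}) :
  \sum_(k in S) (k == a)%:R = (a \in S)%:R :> K.
Proof.
rewrite sum_mkset (bigD1 a) //= eqxx mulr1 big1 ?addr0 // => k /negbTE ->.
by rewrite mulr0.
Qed.

Lemma sum_pos_seq (K : realFieldType) (T : eqType) (ws : seq T) (G : T -> K) :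
  ws != [::] -> (forall ab, ab \in ws -> 0 < G ab) -> 0 < \sum_(ab <- ws) G ab.
Proof.
case: ws => // a ws _ H; rewrite big_cons.
apply: ltr_wpDr; last by apply: H; rewrite inE eqxx.
rewrite big_seq; apply: sumr_ge0 => b bw; apply: ltW; apply: H; by rewrite inE bw orbT.
Qed.

Section PartA.
Variables (K : realFieldType) (N nR : nat) (F : 'I_nR -> {set 'I_N} -> K)
  (th : 'I_nR -> 'I_N -> K) (y xi : 'I_nR -> 'I_N -> K) (r0 : 'I_nR).
Hypotheses (Fsub : forall r, submodular (F r)) (F0 : forall r, F r set0 = 0)
  (yB : in_Bprod F y) (xiB : in_Bprod F xi)
  (th_ge0 : forall r i, 0 <= th r i)
  (th_pos : forall r i, incident (F r) i -> 0 < th r i)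
  (xi_opt : forall xi', in_Bprod F xi' -> (forall i, Aop xi' i = Aop xi i) ->
     bnorm2 th (fun r i => y r i - xi r i) <= bnorm2 th (fun r i => y r i - xi' r i)).

Let delta r i := y r i - xi r i.

Lemma delta_inc r i : delta r i != 0 -> incident (F r) i.
Proof.
apply: contraR => ni; rewrite /delta (base_vanish (F0 r) (yB r) ni).
by rewrite (base_vanish (F0 r) (xiB r) ni) subrr.
Qed.

Definition arc r i j := (0 < delta r i) && (delta r j < 0) && (j \in mintight (F r) (xi r) i).
Definition earc : rel 'I_N := fun i j => [exists r, arc r i j].

Let lab (ab : 'I_N * 'I_N) := if [pick r | arc r ab.1 ab.2] is Some r then r else r0.

Lemma lab_arc ab : earc ab.1 ab.2 -> arc (lab ab) ab.1 ab.2.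
Proof. by rewrite /lab; case: pickP => [r //|H /existsP[r]]; rewrite H. Qed.

Lemma partition_lab (ws : seq ('I_N * 'I_N)) (G : 'I_nR -> 'I_N * 'I_N -> K) :
  \sum_r \sum_(ab <- ws | lab ab == r) G r ab = \sum_(ab <- ws) G (lab ab) ab.
Proof.
under eq_bigr => r _ do rewrite big_mkcond.
rewrite exchange_big /=; apply: eq_bigr => ab _.
rewrite -big_mkcond /=.
under eq_bigl => r do rewrite eq_sym.
rewrite big_pred1_eq //.
Qed.

Lemma no_circ (ws : seq ('I_N * 'I_N)) : ws != [::] ->
  all (fun ab => earc ab.1 ab.2) ws ->
  (forall k, \sum_(ab <- ws) ((k == ab.1)%:R - (k == ab.2)%:R) = 0 :> K) -> False.
Proof.
move=> wsn wsa bal.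
have Hl : forall ab, ab \in ws -> arc (lab ab) ab.1 ab.2.
  by move=> ab abw; apply: lab_arc; exact: (allP wsa).
set d := fun r k => \sum_(ab <- ws | lab ab == r) ((k == ab.1)%:R - (k == ab.2)%:R) : K.
have dsum : forall r, \sum_k d r k = 0.
  move=> r; rewrite /d exchange_big /= big1_seq // => ab _.
  by rewrite sumrB !sum_eq1 subrr.
have dtight : forall r S, tight (F r) (xi r) S -> \sum_(k in S) d r k <= 0.
  move=> r S tS; rewrite /d exchange_big /= big_seq_cond.
  apply: sumr_le0 => ab /andP[abw /eqP lr].
  rewrite sumrB !sum_eq1S subr_le0.
  have := Hl ab abw; rewrite lr => /andP[_ hm].
  case aS: (ab.1 \in S); last by case: (ab.2 \in S).
  by rewrite (subsetP (mintight_sub tS aS) _ hm).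
have dA : forall k, \sum_r d r k = 0.
  by move=> k; rewrite /d (partition_lab ws (fun _ ab => (k == ab.1)%:R - (k == ab.2)%:R)).
have [e0 e00 He0] : exists2 e, 0 < e & forall r e', 0 <= e' <= e ->
    in_base (F r) (fun i => xi r i + e' * d r i).
  apply: fin_eps => r; apply: (@feasible_dir _ _ _ _ (xiB r) (d r)); [exact: dsum | exact: dtight].
set X := \sum_r \sum_k th r k * delta r k * d r k.
set Y := \sum_r \sum_k th r k * d r k ^+ 2.
have Y0 : 0 <= Y by apply: sumr_ge0 => r _; apply: sumr_ge0 => k _; rewrite mulr_ge0 // sqr_ge0.
have XE : X = \sum_(ab <- ws) (th (lab ab) ab.1 * delta (lab ab) ab.1
                               - th (lab ab) ab.2 * delta (lab ab) ab.2).
  rewrite /X /d -(partition_lab ws (fun r ab => th r ab.1 * delta r ab.1 - th r ab.2 * delta r ab.2)).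
  apply: eq_bigr => r _.
  under eq_bigr => k _ do rewrite mulr_sumr.
  rewrite exchange_big /=; apply: eq_bigr => ab _.
  under eq_bigr => k _ do rewrite mulrBr.
  by rewrite sumrB !sum_eq1f.
have X0 : 0 < X.
  rewrite XE; apply: sum_pos_seq => // ab abw.
  have /andP[/andP[h1 h2] _] := Hl ab abw.
  have tp : 0 < th (lab ab) ab.1 by apply: th_pos; apply: delta_inc; rewrite gt_eqF.
  have := th_ge0 (lab ab) ab.2.
  have : 0 < th (lab ab) ab.1 * delta (lab ab) ab.1 by rewrite mulr_gt0.
  move=> h3 h4; have : th (lab ab) ab.2 * delta (lab ab) ab.2 <= 0 by rewrite mulr_ge0_le0 // ltW.
  lra.
set e := Num.min e0 (X / (Y + 1)).
have Y1 : 0 < Y + 1 by lra.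
have e0p : 0 < e by rewrite lt_min e00 divr_gt0.
have eY : e * Y < X.
  have h : e <= X / (Y + 1) by rewrite ge_min lexx orbT.
  have : e * Y <= X / (Y + 1) * Y by apply: ler_wpM2r.
  have : X / (Y + 1) * Y < X.
    rewrite mulrAC ltr_pdivrMr // ltr_pM2l //; lra.
  lra.
set xi' := fun r i => xi r i + e * d r i.
have xi'B : in_Bprod F xi'.
  move=> r; apply: He0; rewrite ltW //= ge_min lexx //.
have xi'A : forall i, Aop xi' i = Aop xi i.
  move=> i; rewrite /Aop /xi' big_split /= -mulr_sumr dA mulr0 addr0 //.
have := xi_opt xi'B xi'A.
have -> : bnorm2 th (fun r i => y r i - xi' r i) =
          bnorm2 th (fun r i => y r i - xi r i) - 2 * e * X + e ^+ 2 * Y.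
  have E : forall r, wnorm2 (th r) (fun i => y r i - xi' r i) =
      wnorm2 (th r) (fun i => y r i - xi r i) - 2 * e * \sum_k th r k * delta r k * d r k
      + e ^+ 2 * \sum_k th r k * d r k ^+ 2.
    move=> r; rewrite /wnorm2 !mulr_sumr -sumrB -big_split /=.
    by apply: eq_bigr => k _; rewrite /xi' /delta; ring.
  rewrite /bnorm2; under eq_bigr => r _ do rewrite E.
  by rewrite big_split sumrB /= /X /Y !mulr_sumr.
have : 0 < e * (2 * X - e * Y) by rewrite mulr_gt0 //; lra.
lra.
Qed.


Lemma telesc (f : 'I_N -> K) j p :
  \sum_(ab <- zip (j :: p) p) (f ab.1 - f ab.2) = f j - f (last j p).
Proof.
elim: p j => [|x p IH] j /=; first by rewrite big_nil subrr.
by rewrite big_cons IH /=; ring.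
Qed.

Lemma path_all j p : path earc j p -> all (fun ab => earc ab.1 ab.2) (zip (j :: p) p).
Proof.
elim: p j => [|x p IH] j //= /andP[h1 h2]; rewrite h1 /=; exact: IH.
Qed.

Lemma acyclic i j : earc i j -> connect earc j i -> False.
Proof.
move=> eij /connectP[p pth lst].
apply: (@no_circ ((i, j) :: zip (j :: p) p)) => //.
  by rewrite /= eij; exact: path_all.
move=> k; rewrite big_cons /=.
rewrite (telesc (fun a => (k == a)%:R)) -lst; ring.
Qed.

Lemma sum_split (W : {set 'I_N}) (g : 'I_N -> K) :
  \sum_k g k = \sum_(k in W) g k + \sum_(k in ~: W) g k.
Proof.
rewrite !sum_mkset -big_split /=; apply: eq_bigr => k _; rewrite inE.
by case: (k \in W) => /=; ring.
Qed.

Lemma delta_sum0 r : \sum_k delta r k = 0.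
Proof. by rewrite /delta sumrB (yB r).2 (xiB r).2 subrr. Qed.

Lemma closed_nonneg (U : {set 'I_N}) :
  (forall k j, j \in U -> earc k j -> k \in U) -> forall r, 0 <= \sum_(j in U) delta r j.
Proof.
move=> HU r.
set T := \bigcup_(i | (0 < delta r i) && (i \notin U)) mintight (F r) (xi r) i.
have tT : tight (F r) (xi r) T.
  apply: (tight_bigcup (Fsub r) (F0 r) (xiB r)) => i _; exact: mintight_tight (Fsub r) (xiB r) i.
have sT : \sum_(j in T) delta r j <= 0.
  rewrite /delta sumrB (eqP tT); have := (yB r).1 T; lra.
have key : \sum_(j in ~: U) delta r j <= \sum_(j in T) delta r j.
  rewrite !sum_mkset; apply: ler_sum => j _; rewrite inE.
  have [dp|dn] := ltrP 0 (delta r j).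
    case jU: (j \in U) => /=.
      by rewrite mul0r mulr_ge0 // ltW.
    have -> : j \in T by apply/bigcupP; exists j; [rewrite dp jU | exact: mintight_mem].
    by [].
  case jU: (j \in U) => /=.
    case jT: (j \in T); last by rewrite !mul0r.
    have [dz|dz] := eqVneq (delta r j) 0; first by rewrite dz !mulr0.
    have dneg : delta r j < 0 by rewrite lt_neqAle dz dn.
    case/bigcupP: jT => i /andP[ip iU] jm.
    have : earc i j by apply/existsP; exists r; rewrite /arc ip dneg jm.
    by move/(HU i j jU); rewrite (negbTE iU).
  by case: (j \in T); rewrite ?mul1r ?mul0r.
have := sum_split U (delta r); rewrite delta_sum0; lra.
Qed.

Let z k := \sum_r delta r k.

Lemma z_sum0 : \sum_k z k = 0.
Proof. by rewrite /z exchange_big /= big1 // => r _; exact: delta_sum0. Qed.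

Lemma set_sum_bound (W : {set 'I_N}) :
  `|\sum_(k in W) z k| <= (\sum_k `|z k|) / 2.
Proof.
have e1 := sum_split W z; have e2 := sum_split W (fun k => `|z k|).
rewrite z_sum0 in e1.
have h1 : `|\sum_(k in W) z k| <= \sum_(k in W) `|z k| by exact: ler_norm_sum.
have h2 : `|\sum_(k in ~: W) z k| <= \sum_(k in ~: W) `|z k| by exact: ler_norm_sum.
have h3 : \sum_(k in ~: W) z k = - \sum_(k in W) z k by lra.
rewrite h3 normrN in h2.
rewrite ler_pdivlMr //; lra.
Qed.

Lemma node_bound i :
  \sum_r delta r i ^+ 2 <= 2 * ((\sum_k `|z k|) / 2) ^+ 2.
Proof.
set S := (\sum_k `|z k|) / 2.
set U := [set k | connect earc k i].
set V := [set k | connect earc i k].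
have iU : i \in U by rewrite inE connect0.
have iV : i \in V by rewrite inE connect0.
have cU : forall k j, j \in U -> earc k j -> k \in U.
  move=> k j; rewrite !inE => cj ekj; exact: connect_trans (connect1 ekj) cj.
have cU' : forall k j, j \in U :\ i -> earc k j -> k \in U :\ i.
  move=> k j; rewrite !inE => /andP[ji cj] ekj.
  rewrite (connect_trans (connect1 ekj) cj) andbT.
  apply/eqP => ki; subst k; exact: acyclic ekj cj.
have cV : forall k j, j \in ~: V -> earc k j -> k \in ~: V.
  move=> k j; rewrite !inE => cj ekj; apply: contra cj => cik.
  exact: connect_trans cik (connect1 ekj).
have cV' : forall k j, j \in ~: (V :\ i) -> earc k j -> k \in ~: (V :\ i).
  move=> k j hj ekj; rewrite !inE in hj *.
  apply/negP => /andP[ki cik].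
  have cij : connect earc i j := connect_trans cik (connect1 ekj).
  move: hj; rewrite cij andbT negbK => /eqP ji.
  subst j; exact: acyclic ekj cik.
set a := fun r => \sum_(j in U) delta r j.
set b := fun r => \sum_(j in V) delta r j.
have ha : forall r, 0 <= a r /\ delta r i <= a r.
  move=> r; split; first exact: closed_nonneg cU r.
  rewrite /a (big_setD1 _ iU) /= lerDl; exact: closed_nonneg cU' r.
have negV : forall W : {set 'I_N}, (forall k j, j \in ~: W -> earc k j -> k \in ~: W) ->
    forall r, \sum_(j in W) delta r j <= 0.
  move=> W cW r; have := closed_nonneg cW r; have := sum_split W (delta r).
  rewrite delta_sum0; lra.
have hb : forall r, b r <= 0 /\ b r <= delta r i.
  move=> r; split; first exact: negV cV r.
  rewrite /b (big_setD1 _ iV) /= gerDl; exact: negV cV' r.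
have step1 : \sum_r delta r i ^+ 2 <= \sum_r a r ^+ 2 + \sum_r (- b r) ^+ 2.
  rewrite -big_split /=; apply: ler_sum => r _.
  have [a0 ha'] := ha r; have [b0 hb'] := hb r.
  rewrite sqrrN.
  have [d0|d0] := lerP 0 (delta r i).
    have : 0 <= (a r - delta r i) * (a r + delta r i) by apply: mulr_ge0; lra.
    have := sqr_ge0 (b r); rewrite !expr2; nra.
  have : 0 <= (delta r i - b r) * (- delta r i - b r) by apply: mulr_ge0; lra.
  have := sqr_ge0 (a r); rewrite !expr2; nra.
have sa : \sum_r a r ^+ 2 <= (\sum_r a r) ^+ 2.
  by apply: (@sumsq_le _ _ xpredT) => r _; case: (ha r).
have sb : \sum_r (- b r) ^+ 2 <= (\sum_r - b r) ^+ 2.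
  by apply: (@sumsq_le _ _ xpredT) => r _; case: (hb r) => h _; rewrite oppr_ge0.
have Ea : \sum_r a r = \sum_(k in U) z k by rewrite /a /z exchange_big.
have Eb : \sum_r - b r = - \sum_(k in V) z k by rewrite sumrN /b /z exchange_big.
have bA := set_sum_bound U; have bB := set_sum_bound V.
rewrite -/S in bA bB.
have qa : (\sum_r a r) ^+ 2 <= S ^+ 2.
  rewrite Ea -(real_normK (num_real (\sum_(k in U) z k))).
  have S0 : 0 <= S by apply: le_trans bA.
  by rewrite ler_sqr // nnegrE.
have qb : (\sum_r - b r) ^+ 2 <= S ^+ 2.
  rewrite Eb sqrrN -(real_normK (num_real (\sum_(k in V) z k))).
  have S0 : 0 <= S by apply: le_trans bB.
  by rewrite ler_sqr // nnegrE.
lra.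
Qed.

Lemma partA_bound :
  bnorm2 th delta <= N%:R * norm1inf F th / 2 * \sum_k z k ^+ 2.
Proof.
set S := (\sum_k `|z k|) / 2.
set m := fun k => \big[Num.max/0]_(r | incident (F r) k) th r k.
have m0 : forall k, 0 <= m k by move=> k; exact: bigmax_ge_id.
have h1 : bnorm2 th delta <= \sum_k m k * \sum_r delta r k ^+ 2.
  rewrite /bnorm2 /wnorm2 exchange_big /=; apply: ler_sum => k _.
  rewrite mulr_sumr; apply: ler_sum => r _.
  have [ik|nik] := boolP (incident (F r) k).
    apply: ler_wpM2r; first exact: sqr_ge0.
    exact: (@le_bigmax_cond _ _ _ 0 r (fun r => incident (F r) k) (fun r => th r k) ik).
  have -> : delta r k = 0 by apply/eqP; apply: contraR nik; exact: delta_inc.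
  by rewrite expr0n /= !mulr0.
have h2 : \sum_k m k * \sum_r delta r k ^+ 2 <= norm1inf F th * (2 * S ^+ 2).
  rewrite /norm1inf mulr_suml; apply: ler_sum => k _.
  by apply: ler_wpM2l => //; exact: node_bound.
have h3 : S ^+ 2 <= N%:R / 4 * \sum_k z k ^+ 2.
  have cs := @cs_sum K _ xpredT (fun k => `|z k|).
  have e1 : \sum_(k in xpredT) `|z k| = \sum_k `|z k| by [].
  have cN : #|(xpredT : pred 'I_N)| = N by rewrite cardT size_enum_ord.
  rewrite cN in cs.
  have e2 : \sum_(k in xpredT) `|z k| ^+ 2 = \sum_k z k ^+ 2.
    by apply: eq_bigr => k _; rewrite real_normK // num_real.
  rewrite e2 in cs.
  have -> : S ^+ 2 = (\sum_k `|z k|) ^+ 2 / 4 by rewrite /S; field.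
  move: cs; set q := (\sum_(k in xpredT) `|z k|) ^+ 2; set w := N%:R * _.
  have -> : N%:R / 4 * \sum_k z k ^+ 2 = w / 4 by rewrite /w; field.
  move=> cs; lra.
have n0 : 0 <= norm1inf F th by apply: sumr_ge0 => k _; exact: m0.
have : norm1inf F th * (2 * S ^+ 2) <= norm1inf F th * (2 * (N%:R / 4 * \sum_k z k ^+ 2)).
  apply: ler_wpM2l => //; lra.
have -> : norm1inf F th * (2 * (N%:R / 4 * \sum_k z k ^+ 2)) =
          N%:R * norm1inf F th / 2 * \sum_k z k ^+ 2 by field.
lra.
Qed.

End PartA.

Set Implicit Arguments. Unset Strict Implicit. Unset Printing Implicit Defensive.

Section PartB.
Variables (K : realFieldType) (N nR : nat)
  (F : 'I_nR -> {set 'I_N} -> K) (P : {set 'I_nR} -> K) (alpha : K)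
  (f : 'I_nR -> ('I_N -> K) -> K) (xstar : 'I_N -> K) (gstar : K)
  (D : ('I_nR -> 'I_N -> K) -> K).
Hypotheses (Npos : (0 < N)%N) (Fsub : forall r, submodular (F r))
  (F0 : forall r, F r set0 = 0) (Finc : forall i, exists r, incident (F r) i)
  (Pprop : alpha_proper P alpha)
  (flov : forall r x, lovasz_value (F r) x (f r x))
  (xopt : forall x, \sum_r f r xstar + 2^-1 * \sum_i xstar i ^+ 2
             <= \sum_r f r x + 2^-1 * \sum_i x i ^+ 2)
  (gmin : is_min (in_Bprod F) (@gfun K N nR) gstar)
  (Dmin : forall yy, is_min (Xi F xstar)
                (fun z => bnorm2 (theta F P) (fun r i => yy r i - z r i)) (D yy)).

Local Notation th := (theta F P).

Lemma alpha_pos : 0 < alpha.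
Proof. by case: Pprop => /andP[]. Qed.

Lemma Pge0 (C : {set 'I_nR}) : 0 <= P C.
Proof. by case: Pprop. Qed.

Lemma Psum_in (r : 'I_nR) : \sum_(C : {set 'I_nR} | r \in C) P C = alpha.
Proof. by case: Pprop. Qed.

Lemma Psum_notin (r : 'I_nR) : \sum_(C : {set 'I_nR} | r \notin C) P C = 1 - alpha.
Proof.
case: Pprop => _ _ S1 _; rewrite -S1 [X in _ = X - _](bigID (fun C : {set 'I_nR} => r \in C) xpredT) /= Psum_in; ring.
Qed.

Lemma th_num (r : 'I_nR) (i : 'I_N) : \sum_(C : {set 'I_nR} | r \in C) P C * (mu F C i)%:R = alpha * th r i.
Proof. by rewrite /theta Psum_in mulrC divfK // gt_eqF // alpha_pos. Qed.

Lemma th_ge0 r i : 0 <= th r i.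
Proof.
rewrite /theta Psum_in divr_ge0 ?(ltW alpha_pos) //.
by apply: sumr_ge0 => C _; rewrite mulr_ge0 ?Pge0 ?ler0n.
Qed.

Lemma th_ge1 r i : incident (F r) i -> 1 <= th r i.
Proof.
move=> ir; rewrite /theta Psum_in ler_pdivlMr ?alpha_pos // mul1r.
rewrite -{1}(Psum_in r); apply: ler_sum => C rC.
rewrite -{1}(mulr1 (P C)); apply: ler_wpM2l; first exact: Pge0.
rewrite ler1n /mu card_gt0; apply/set0Pn; exists r; by rewrite inE rC ir.
Qed.

Lemma th_pos r i : incident (F r) i -> 0 < th r i.
Proof. by move/th_ge1; apply: lt_le_trans. Qed.

Lemma lov_scale r x t : 0 <= t -> f r (fun i => t * x i) = t * f r x.
Proof.
move=> t0.
have [[u0 u0B e0] H0] := flov r x.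
have [[u1 u1B e1] H1] := flov r (fun i => t * x i).
have sc : forall u, \sum_i u i * (t * x i) = t * \sum_i u i * x i.
  by move=> u; rewrite mulr_sumr; apply: eq_bigr => i _; ring.
apply/eqP; rewrite eq_le; apply/andP; split.
  by rewrite -e1 sc; apply: ler_wpM2l => //; exact: H0.
by rewrite -e0 -sc; exact: H1.
Qed.

Local Notation Q := (\sum_i xstar i ^+ 2).

Lemma fs_le : \sum_r f r xstar <= - Q.
Proof.
set Fs := \sum_r f r xstar.
have Q0 : 0 <= Q by apply: sumr_ge0 => i _; exact: sqr_ge0.
suff : 0 <= (- Fs - Q) / 2 by rewrite pmulr_lge0 //; lra.
apply: (@vi_lemma _ _ (Q / 2)) => [s s0 s1|]; last by rewrite divr_ge0.
have := xopt (fun i => (1 - s) * xstar i).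
have E : \sum_r f r (fun i => (1 - s) * xstar i) = (1 - s) * Fs.
  by rewrite /Fs mulr_sumr; apply: eq_bigr => r _; apply: lov_scale; lra.
rewrite E.
have -> : \sum_i ((1 - s) * xstar i) ^+ 2 = (1 - s) ^+ 2 * Q.
  by rewrite mulr_sumr; apply: eq_bigr => i _; ring.
rewrite -/Fs => h.
have -> : 2 * s * ((- Fs - Q) / 2) + s ^+ 2 * (Q / 2) =
  ((1 - s) * Fs + 2^-1 * ((1 - s) ^+ 2 * Q)) - (Fs + 2^-1 * Q) by field.
lra.
Qed.

Lemma Av_le v : in_Bprod F v -> \sum_i Aop v i * xstar i <= - Q.
Proof.
move=> vB; apply: le_trans fs_le.
rewrite /Aop; under eq_bigr => i _ do rewrite mulr_suml.
rewrite exchange_big /=; apply: ler_sum => r _.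
have [_ H] := flov r xstar; exact: H (vB r).
Qed.

Lemma g_lower v : in_Bprod F v ->
  Q / 2 + 2^-1 * \sum_i (Aop v i + xstar i) ^+ 2 <= gfun v.
Proof.
move=> vB; have := Av_le vB; rewrite /gfun.
have -> : \sum_i (Aop v i + xstar i) ^+ 2 =
    \sum_i Aop v i ^+ 2 + 2 * \sum_i Aop v i * xstar i + Q.
  by rewrite [2 * _]mulr_sumr -!big_split /=; apply: eq_bigr => i _; ring.
lra.
Qed.

Lemma gXi xi : Xi F xstar xi -> gfun xi = Q / 2.
Proof.
case=> _ H; rewrite /gfun (eq_bigr (fun i => xstar i ^+ 2)); first by rewrite mulrC.
by move=> i _; rewrite H sqrrN.
Qed.

Lemma Xi_ex : exists xi, Xi F xstar xi.
Proof. by have [[xi H _] _] := Dmin (fun _ _ => 0); exists xi. Qed.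

Lemma gstar_eq : gstar = Q / 2.
Proof.
have [xi Hxi] := Xi_ex.
have [[v vB <-] H] := gmin.
apply/eqP; rewrite eq_le; apply/andP; split.
  by rewrite -(gXi Hxi); apply: H; case: Hxi.
have := g_lower vB.
have : 0 <= \sum_i (Aop v i + xstar i) ^+ 2 by apply: sumr_ge0 => i _; exact: sqr_ge0.
lra.
Qed.


Lemma wnorm_expand (w z1 z2 : 'I_N -> K) (t : K) :
  wnorm2 w (fun i => z1 i + t * z2 i) =
  wnorm2 w z1 + 2 * t * \sum_i w i * z1 i * z2 i + t ^+ 2 * wnorm2 w z2.
Proof.
rewrite /wnorm2 [2 * t * _]mulr_sumr [t ^+ 2 * _]mulr_sumr -!big_split /=.
by apply: eq_bigr => i _; ring.
Qed.

Lemma proj_uniq r u z1 z2 :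
  is_wproj (in_base (F r)) (th r) u z1 -> is_wproj (in_base (F r)) (th r) u z2 ->
  forall i, z1 i = z2 i.
Proof.
move=> [B1 H1] [B2 H2].
have mB := @base_conv _ _ (F r) z1 z2 (2^-1) B1 B2.
have h0 : (0 <= 2^-1 :> K) && (2^-1 <= 1 :> K) by apply/andP; split; lra.
have := H1 _ (mB h0); have := H2 _ B1; have := H1 _ B2.
have E : wnorm2 (th r) (fun i => z1 i + 2^-1 * (z2 i - z1 i) - u i) =
   2^-1 * wnorm2 (th r) (fun i => z1 i - u i) + 2^-1 * wnorm2 (th r) (fun i => z2 i - u i)
   - 4^-1 * wnorm2 (th r) (fun i => z1 i - z2 i).
  rewrite /wnorm2 [2^-1 * _]mulr_sumr [2^-1 * \sum_i _]mulr_sumr [4^-1 * _]mulr_sumr.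
  by rewrite -big_split -sumrB /=; apply: eq_bigr => i _; field.
rewrite E => e1 e2 e3.
have W0 : wnorm2 (th r) (fun i => z1 i - z2 i) <= 0 by lra.
have Wge : forall i, 0 <= th r i * (z1 i - z2 i) ^+ 2 by move=> i; rewrite mulr_ge0 ?th_ge0 ?sqr_ge0.
have W00 : wnorm2 (th r) (fun i => z1 i - z2 i) = 0.
  by apply/eqP; rewrite eq_le W0 /=; apply: sumr_ge0 => i _; exact: Wge.
move=> i.
have [ir|nir] := boolP (incident (F r) i); last first.
  by rewrite (base_vanish (F0 r) B1 nir) (base_vanish (F0 r) B2 nir).
have := @psumr_eq0P _ _ _ _ (fun i _ => Wge i) W00 i isT.
move/eqP; rewrite mulf_eq0 (gt_eqF (th_pos ir)) /= sqrf_eq0 subr_eq0 => /eqP //.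
Qed.

Lemma proj_vi r u z w :
  is_wproj (in_base (F r)) (th r) u z -> in_base (F r) w ->
  0 <= \sum_i th r i * (z i - u i) * (w i - z i).
Proof.
move=> [zB H] wB.
apply: (@vi_lemma _ _ (wnorm2 (th r) (fun i => w i - z i))); last first.
  by apply: sumr_ge0 => i _; rewrite mulr_ge0 ?th_ge0 ?sqr_ge0.
move=> t t0 t1.
have := H _ (@base_conv _ _ (F r) z w t zB wB _); rewrite t1 ltW //= => /(_ isT).
have -> : wnorm2 (th r) (fun i => z i + t * (w i - z i) - u i) =
   wnorm2 (th r) (fun i => (z i - u i) + t * (w i - z i)).
  by apply: eq_bigr => i _; congr (_ * _); ring.
rewrite wnorm_expand; lra.
Qed.


Lemma some_r : exists r0 : 'I_nR, True.
Proof. by have [r _] := Finc (Ordinal Npos); exists r. Qed.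

Lemma norm1inf_ge : N%:R <= norm1inf F th.
Proof.
have E1 : \sum_(i < N) (1 : K) = N%:R by rewrite sumr_const card_ord.
rewrite /norm1inf -E1.
apply: ler_sum => i _; have [r ir] := Finc i.
apply: le_trans (th_ge1 ir) _.
exact: (@le_bigmax_cond _ _ _ 0 r (fun r => incident (F r) i) (fun r => th r i) ir).
Qed.

Definition Mc := N%:R * norm1inf F th.

Lemma N1_base v w : N = 1%N -> in_Bprod F v -> in_Bprod F w -> forall r i, v r i = w r i.
Proof.
move=> N1 vB wB r i.
have e : forall u : 'I_N -> K, \sum_j u j = u i.
  move=> u; rewrite (bigD1 i) //= big1 ?addr0 // => j ji.
  exfalso; move: ji; apply/negP; rewrite negbK; apply/eqP/val_inj.
  have hi : (val i < 1)%N by rewrite -[1%N]N1 ltn_ord.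
  have hj : (val j < 1)%N by rewrite -[1%N]N1 ltn_ord.
  by move: hi hj; case: (val i); case: (val j).
by rewrite -e (vB r).2 -(wB r).2 e.
Qed.

Lemma key_facts v : in_Bprod F v ->
  exists2 xi, Xi F xstar xi & exists a Ee,
  [/\ D v = Ee, Ee = bnorm2 th (fun r i => v r i - xi r i), 0 <= a,
      Ee <= Mc / 2 * a & a / 2 <= gfun v - gstar] /\
  a = \sum_i (Aop v i + xstar i) ^+ 2.
Proof.
move=> vB.
have [[xi xiX xiD] xiMin] := Dmin v.
exists xi => //.
exists (\sum_i (Aop v i + xstar i) ^+ 2), (D v); split => //; split => //.
- by apply: sumr_ge0 => i _; exact: sqr_ge0.
- have [r0 _] := some_r.
  rewrite -xiD.
  have := @partA_bound K N nR F th v xi r0 Fsub F0 vB xiX.1 th_ge0 (@th_pos) _.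
  rewrite /Mc.
  have -> : \sum_k (\sum_r (v r k - xi r k)) ^+ 2 = \sum_i (Aop v i + xstar i) ^+ 2.
    apply: eq_bigr => k _; rewrite sumrB -/(Aop v k) -/(Aop xi k) xiX.2 opprK //.
  apply => xi' xi'B xi'A; rewrite xiD; apply: xiMin; split => // i.
  by rewrite xi'A xiX.2.
- have := g_lower vB; rewrite gstar_eq; lra.
Qed.

Lemma bnorm_ge0 w : 0 <= bnorm2 th w.
Proof. by apply: sumr_ge0 => r _; apply: sumr_ge0 => i _; rewrite mulr_ge0 ?th_ge0 ?sqr_ge0. Qed.

Lemma phi_zero_N1 v : N = 1%N -> in_Bprod F v -> gfun v - gstar + 2^-1 * D v = 0.
Proof.
move=> N1 vB.
have [[w wB wg] _] := gmin.
have G0 : gfun v = gstar.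
  rewrite -wg /gfun; congr (_ * _); apply: eq_bigr => i _; congr (_ ^+ 2).
  by apply: eq_bigr => r _; exact: N1_base.
have [xi _ [a [Ee [[-> Ee_def a0 Eb ag] _]]]] := key_facts vB.
rewrite G0 subrr in ag.
have a00 : a = 0 by lra.
rewrite a00 mulr0 in Eb.
have := bnorm_ge0 (fun r i => v r i - xi r i); rewrite -Ee_def => E0.
rewrite G0; lra.
Qed.


Variable (y : seq {set 'I_nR} -> 'I_nR -> 'I_N -> K).
Hypotheses (yproj : forall (s : seq {set 'I_nR}) (C : {set 'I_nR}) (r : 'I_nR), r \in C ->
     is_wproj (in_base (F r)) (th r)
       (fun i => y s r i - (th r i)^-1 * Aop (y s) i)
       (y (rcons s C) r))
  (ystay : forall (s : seq {set 'I_nR}) (C : {set 'I_nR}) (r : 'I_nR), r \notin C -> y (rcons s C) r = y s r).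

Lemma yB_step s C : in_Bprod F (y s) -> in_Bprod F (y (rcons s C)).
Proof.
move=> vB r; have [rC|rC] := boolP (r \in C); first exact: (yproj s rC).1.
by rewrite ystay //; exact: vB.
Qed.

Lemma sum_inC (C : {set 'I_nR}) (g : 'I_nR -> K) : \sum_(r in C) g r = \sum_r (r \in C)%:R * g r.
Proof. by rewrite big_mkcond; apply: eq_bigr => r _; case: (r \in C); rewrite ?mul1r ?mul0r. Qed.

Lemma big_mkcond_ind (I : finType) (p : pred I) (g : I -> K) :
  \sum_i (p i)%:R * g i = \sum_(i | p i) g i.
Proof. by rewrite [RHS]big_mkcond /=; apply: eq_bigr => i _; case: (p i); rewrite ?mul1r ?mul0r. Qed.

Lemma one_step s : in_Bprod F (y s) ->
  \sum_C P C * (gfun (y (rcons s C)) - gstar + 2^-1 * D (y (rcons s C)))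
  <= (1 - 4 * alpha / (N%:R * norm1inf F th + 2)) * (gfun (y s) - gstar + 2^-1 * D (y s)).
Proof.
move=> vB.
have [N1|N2] : N = 1%N \/ (1 < N)%N by move: Npos; case: N => [|[|n]] //; auto.
  rewrite phi_zero_N1 // mulr0.
  rewrite big1 // => C _; rewrite phi_zero_N1 ?mulr0 //; exact: yB_step.
set v := y s.
have [xi xiX [a [Ee [[DE Ee_def a0 Eb ag] a_def]]]] := key_facts vB.
set yh := y (rcons s setT).
have yhB : forall r, in_base (F r) (yh r) by move=> r; exact: (yproj s (in_setT r)).1.
have yC : forall C r i, y (rcons s C) r i = if r \in C then yh r i else v r i.
  move=> C r i; case: ifP => rC.
    exact: proj_uniq (yproj s rC) (yproj s (in_setT r)) i.
  by rewrite ystay // rC.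
set h := fun r i => yh r i - v r i.
set e := fun r i => xi r i - v r i.
have hvan : forall r i, ~~ incident (F r) i -> h r i = 0.
  move=> r i ni; rewrite /h (base_vanish (F0 r) (yhB r) ni).
  by have := base_vanish (F0 r) (vB r) ni; rewrite -/v => ->; rewrite subrr.
set Av := Aop v.
have AC : forall C i, Aop (y (rcons s C)) i = Av i + \sum_(r in C) h r i.
  move=> C i; rewrite /Av /Aop sum_inC -big_split /=; apply: eq_bigr => r _.
  by rewrite yC /h; case: (r \in C) => /=; ring.
have gC : forall C, gfun (y (rcons s C)) = gfun v + \sum_i Av i * \sum_(r in C) h r i
      + 2^-1 * \sum_i (\sum_(r in C) h r i) ^+ 2.
  move=> C; rewrite /gfun -/(Aop v) -/Av.
  under eq_bigr => i _ do rewrite AC.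
  have E : forall q : 'I_N -> K, \sum_i (Av i + q i) ^+ 2 =
      \sum_i Av i ^+ 2 + 2 * \sum_i Av i * q i + \sum_i q i ^+ 2.
    move=> q; rewrite [2 * _]mulr_sumr -!big_split /=.
    by apply: eq_bigr => i _; ring.
  by rewrite (E (fun i => \sum_(r in C) h r i)); field.
set L := \sum_r \sum_i Av i * h r i.
set H := \sum_r \sum_i th r i * h r i ^+ 2.
set T := \sum_r \sum_i th r i * h r i * e r i.
set W := \sum_r \sum_i Av i * e r i.
have Psum1 : \sum_C P C = 1 by case: Pprop.
have ESO : \sum_C P C * \sum_i (\sum_(r in C) h r i) ^+ 2 <= alpha * H.
  have st1 : forall (C : {set 'I_nR}) (i : 'I_N), (\sum_(r in C) h r i) ^+ 2 <= (mu F C i)%:R * \sum_(r in C) h r i ^+ 2.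
    move=> C i.
    set A := [set r in C | incident (F r) i].
    have eA : forall g : 'I_nR -> K, (forall r, ~~ incident (F r) i -> g r = 0) ->
        \sum_(r in C) g r = \sum_(r in A) g r.
      move=> g hg; rewrite big_mkcond [RHS]big_mkcond /=; apply: eq_bigr => r _; rewrite /A inE.
      case: (r \in C) => //=; case: (boolP (incident (F r) i)) => // ni.
      by rewrite hg.
    rewrite (eA (fun r => h r i)); last by move=> r ni; rewrite hvan.
    rewrite (eA (fun r => h r i ^+ 2)); last by move=> r ni; rewrite hvan // expr0n.
    exact: cs_sum.
  apply: (@le_trans _ _ (\sum_C P C * \sum_i (mu F C i)%:R * \sum_(r in C) h r i ^+ 2)).
    apply: ler_sum => C _; apply: ler_wpM2l; first exact: Pge0.
    by apply: ler_sum => i _; exact: st1.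
  rewrite le_eqVlt; apply/orP; left; apply/eqP.
  transitivity (\sum_(C : {set 'I_nR}) \sum_(i : 'I_N) \sum_(r : 'I_nR) (r \in C)%:R * (P C * (mu F C i)%:R * h r i ^+ 2)).
    apply: eq_bigr => C _; rewrite mulr_sumr; apply: eq_bigr => i _.
    by rewrite sum_inC !mulr_sumr; apply: eq_bigr => r _; ring.
  rewrite exchange_big /=; under eq_bigr => i _ do rewrite exchange_big /=.
  rewrite exchange_big /= /H mulr_sumr; apply: eq_bigr => r _.
  rewrite mulr_sumr; apply: eq_bigr => i _.
  rewrite (big_mkcond_ind (fun C : {set 'I_nR} => r \in C)).
  transitivity (h r i ^+ 2 * \sum_(C : {set 'I_nR} | r \in C) P C * (mu F C i)%:R).
    by rewrite mulr_sumr; apply: eq_bigr => C _; ring.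
  by rewrite th_num; ring.
have LIN : \sum_C P C * \sum_i Av i * \sum_(r in C) h r i = alpha * L.
  transitivity (\sum_(C : {set 'I_nR}) \sum_(i : 'I_N) \sum_(r : 'I_nR) (r \in C)%:R * (P C * (Av i * h r i))).
    apply: eq_bigr => C _; rewrite mulr_sumr; apply: eq_bigr => i _.
    by rewrite sum_inC !mulr_sumr; apply: eq_bigr => r _; ring.
  rewrite exchange_big /=; under eq_bigr => i _ do rewrite exchange_big /=.
  rewrite exchange_big /= /L mulr_sumr; apply: eq_bigr => r _.
  rewrite mulr_sumr; apply: eq_bigr => i _.
  rewrite (big_mkcond_ind (fun C : {set 'I_nR} => r \in C)).
  transitivity (Av i * h r i * \sum_(C : {set 'I_nR} | r \in C) P C).
    by rewrite mulr_sumr; apply: eq_bigr => C _; ring.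
  by rewrite Psum_in; ring.
have Eg : \sum_C P C * gfun (y (rcons s C)) <= gfun v + alpha * L + 2^-1 * (alpha * H).
  under eq_bigr => C _ do rewrite gC.
  rewrite (eq_bigr (fun C => gfun v * P C + P C * \sum_i Av i * \sum_(r in C) h r i
       + 2^-1 * (P C * \sum_i (\sum_(r in C) h r i) ^+ 2))); last by move=> C _; ring.
  rewrite !big_split /= -!mulr_sumr Psum1 mulr1 LIN.
  have : 2^-1 * \sum_C P C * \sum_i (\sum_(r in C) h r i) ^+ 2 <= 2^-1 * (alpha * H).
    by apply: ler_wpM2l => //; lra.
  lra.
set Wh := fun r => wnorm2 (th r) (fun i => yh r i - xi r i).
set Wv := fun r => wnorm2 (th r) (fun i => v r i - xi r i).
have DC : forall C, D (y (rcons s C)) <= \sum_r (if r \in C then Wh r else Wv r).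
  move=> C; have [_ Hm] := Dmin (y (rcons s C)); apply: le_trans (Hm _ xiX) _.
  rewrite /bnorm2; apply: ler_sum => r _; rewrite /Wh /Wv /wnorm2.
  by case: ifP => rC; apply: ler_sum => i _; rewrite yC rC.
have ED : \sum_C P C * D (y (rcons s C)) <= \sum_r (alpha * Wh r + (1 - alpha) * Wv r).
  apply: (@le_trans _ _ (\sum_C P C * \sum_r (if r \in C then Wh r else Wv r))).
    by apply: ler_sum => C _; apply: (ler_wpM2l (Pge0 C)); exact: DC.
  rewrite le_eqVlt; apply/orP; left; apply/eqP.
  under eq_bigr => C _ do rewrite mulr_sumr.
  rewrite exchange_big /=; apply: eq_bigr => r _.
  rewrite (bigID (fun C : {set 'I_nR} => r \in C)) /=.
  under eq_bigr => C rC do rewrite rC.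
  under [X in _ + X]eq_bigr => C rC do rewrite (negbTE rC).
  by rewrite -!mulr_suml Psum_in Psum_notin.
have VI : 0 <= T - H + W - L.
  have E : T - H + W - L = \sum_r \sum_i (th r i * h r i + Av i) * (e r i - h r i).
    rewrite /T /H /W /L -sumrB -big_split -sumrB /=; apply: eq_bigr => r _.
    by rewrite -sumrB -big_split -sumrB /=; apply: eq_bigr => i _; ring.
  rewrite E; apply: sumr_ge0 => r _.
  have H0 := proj_vi (yproj s (in_setT r)) (xiX.1 r).
  apply: le_trans H0 _; rewrite le_eqVlt; apply/orP; left; apply/eqP.
  apply: eq_bigr => i _.
  have [ir|nir] := boolP (incident (F r) i).
    have tn : th r i != 0 by rewrite gt_eqF // th_pos.
    rewrite /h /e -/yh -/v -/Av; field.
    done.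
  rewrite /h /e -/yh -/v.
  rewrite (base_vanish (F0 r) (yhB r) nir) (base_vanish (F0 r) (xiX.1 r) nir).
  by rewrite !subrr !mulr0.
have WhE : forall r, Wh r = \sum_i th r i * (h r i - e r i) ^+ 2.
  by move=> r; apply: eq_bigr => i _; congr (_ * _); rewrite /h /e; congr (_ ^+ 2); ring.
have WvE : forall r, Wv r = \sum_i th r i * e r i ^+ 2.
  by move=> r; apply: eq_bigr => i _; congr (_ * _); rewrite /e -sqrrN; congr (_ ^+ 2); ring.
have EeE : Ee = \sum_r Wv r by rewrite Ee_def.
have SWh : \sum_r Wh r = H - 2 * T + Ee.
  rewrite EeE /H /T [2 * _]mulr_sumr -sumrB -big_split /=; apply: eq_bigr => r _.
  rewrite WhE WvE [2 * _]mulr_sumr -sumrB -big_split /=; apply: eq_bigr => i _; ring.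
have EDs : \sum_r (alpha * Wh r + (1 - alpha) * Wv r) = alpha * (H - 2 * T + Ee) + (1 - alpha) * Ee.
  by rewrite big_split /= -!mulr_sumr SWh EeE.
have gxi : gstar = gfun v + W + a / 2.
  have [xi_B xi_A] := xiX.
  rewrite gstar_eq -(gXi xiX) /gfun.
  set Ae := fun i => \sum_r e r i.
  have AxiE : forall i, Aop xi i = Av i + Ae i.
    by move=> i; rewrite /Ae /e sumrB /Av /Aop; ring.
  have AeE : forall i, Ae i = - xstar i - Av i by move=> i; have := AxiE i; rewrite xi_A; lra.
  have WE : W = \sum_i Av i * Ae i.
    rewrite /W exchange_big /=; apply: eq_bigr => i _; rewrite /Ae mulr_sumr //.
  have aE : a = \sum_i Ae i ^+ 2.
    by rewrite a_def; apply: eq_bigr => i _; rewrite AeE -/(Av i) -sqrrN; congr (_ ^+ 2); ring.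
  rewrite WE aE -/(Aop v) -/Av.
  under eq_bigr => i _ do rewrite AxiE.
  have E : \sum_i (Av i + Ae i) ^+ 2 =
      \sum_i Av i ^+ 2 + 2 * \sum_i Av i * Ae i + \sum_i Ae i ^+ 2.
    rewrite [2 * _]mulr_sumr -!big_split /=.
    by apply: eq_bigr => i _; ring.
  by rewrite E; field.
have LHS : \sum_C P C * (gfun (y (rcons s C)) - gstar + 2^-1 * D (y (rcons s C))) =
    \sum_C P C * gfun (y (rcons s C)) - gstar + 2^-1 * \sum_C P C * D (y (rcons s C)).
  rewrite (eq_bigr (fun C => P C * gfun (y (rcons s C)) - gstar * P C
      + 2^-1 * (P C * D (y (rcons s C))))); last by move=> C _; ring.
  by rewrite big_split sumrB /= -!mulr_sumr Psum1 mulr1.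
have VIa : 0 <= alpha * (T - H + W - L) by rewrite mulr_ge0 // ltW // alpha_pos.
have step : \sum_C P C * (gfun (y (rcons s C)) - gstar + 2^-1 * D (y (rcons s C)))
   <= (1 - alpha) * (gfun v - gstar) - alpha * a / 2 + Ee / 2.
  rewrite LHS; rewrite EDs in ED.
  have aW : alpha * W = alpha * gstar - alpha * gfun v - alpha * a / 2 by rewrite gxi; field.
  lra.
apply: le_trans step _.
rewrite DE.
set c := 4 * alpha / (N%:R * norm1inf F th + 2).
set G := gfun v - gstar.
have Mc0 : 0 <= Mc by rewrite /Mc mulr_ge0 // (le_trans _ norm1inf_ge).
have cM : c * (Mc + 2) = 4 * alpha by rewrite /c -/Mc divfK // gt_eqF //; lra.
have c0 : 0 <= c by rewrite /c -/Mc divr_ge0 //; [have := alpha_pos; lra | lra].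
have [ca|ac] := lerP c alpha.
  have h1 : 0 <= (alpha - c) * (G - a / 2) by apply: mulr_ge0; rewrite subr_ge0.
  have h2 : c * Ee <= (2 * alpha - c) * a.
    apply: (@le_trans _ _ (c * (Mc / 2 * a))); first by apply: ler_wpM2l.
    have -> : c * (Mc / 2 * a) = (c * (Mc + 2)) / 2 * a - c * a by field.
    by rewrite cM le_eqVlt; apply/orP; left; apply/eqP; field.
  lra.
exfalso.
have NN : 2 <= N%:R :> K by rewrite ler_nat.
have M4 : 4 <= Mc.
  have := norm1inf_ge; rewrite /Mc => hN.
  have : 2 * 2 <= N%:R * norm1inf F th by apply: ler_pM => //; lra.
  lra.
have : 0 < (c - alpha) * (Mc + 2) by apply: mulr_gt0; lra.
have : alpha * 4 <= alpha * Mc by apply: ler_wpM2l => //; have := alpha_pos; lra.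
have := alpha_pos.
lra.
Qed.

End PartB.

Unset Implicit Arguments. Set Strict Implicit. Set Printing Implicit Defensive.

Lemma sum_tuple_rcons (K : realFieldType) (T : finType) (k : nat) (G : seq T -> K) :
  \sum_(t : k.+1.-tuple T) G t = \sum_(s : k.-tuple T) \sum_(C : T) G (rcons s C).
Proof.
rewrite pair_big /=.
pose h := fun p : k.-tuple T * T => [tuple of rcons p.1 p.2].
pose g := fun t : k.+1.-tuple T => ([tuple of belast (thead t) (behead t)], last (thead t) (behead t)).
have hg : cancel g h.
  move=> t; apply: val_inj => /=; rewrite -lastI.
  by case: t => -[|x s] //= _.
have gh : cancel h g.
  move=> [s C]; rewrite /g /h /=.
  have E : rcons s C = thead [tuple of rcons s C] :: behead [tuple of rcons s C].
    by case: s => -[|x s] //.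
  have := E; rewrite lastI => /rcons_inj [E1 E2].
  by congr (_, _); [apply: val_inj; rewrite /= -E1 | rewrite -E2].
rewrite (reindex h) /=; last by exists g => t _; [exact: gh | exact: hg].
done.
Qed.

Theorem theorem3p10 (K : realFieldType) (N nR : nat)
  (F : 'I_nR -> {set 'I_N} -> K) (P : {set 'I_nR} -> K) (alpha : K)
  (f : 'I_nR -> ('I_N -> K) -> K) (xstar : 'I_N -> K) (gstar : K)
  (D : ('I_nR -> 'I_N -> K) -> K)
  (y : seq {set 'I_nR} -> 'I_nR -> 'I_N -> K) :
  (0 < N)%N -> (0 < nR)%N ->
  (forall r, submodular (F r)) ->
  (forall r, F r set0 = 0) ->
  (forall i, exists r, incident (F r) i) ->
  alpha_proper P alpha ->
  (* f r = Lovasz extension of F r *)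
  (forall r x, lovasz_value (F r) x (f r x)) ->
  (* x^* minimizes sum_r f_r(x) + 1/2 ||x||^2 *)
  (forall x, \sum_r f r xstar + 2^-1 * \sum_i xstar i ^+ 2
             <= \sum_r f r x + 2^-1 * \sum_i x i ^+ 2) ->
  (* g^* = min_{y in B} g(y) *)
  is_min (in_Bprod F) (@gfun K N nR) gstar ->
  (* D y = d_theta^2(y, Xi) *)
  (forall yy, is_min (Xi F xstar)
                (fun z => bnorm2 (theta F P) (fun r i => yy r i - z r i)) (D yy)) ->
  (* Algorithm 1 *)
  in_Bprod F (y [::]) ->
  (forall (s : seq {set 'I_nR}) (C : {set 'I_nR}) (r : 'I_nR), r \in C ->
     is_wproj (in_base (F r)) (theta F P r)
       (fun i => y s r i - (theta F P r i)^-1 * Aop (y s) i)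
       (y (rcons s C) r)) ->
  (forall (s : seq {set 'I_nR}) (C : {set 'I_nR}) (r : 'I_nR), r \notin C -> y (rcons s C) r = y s r) ->
  forall k : nat,
    \sum_(s : k.-tuple {set 'I_nR})
        (\prod_(j < k) P (tnth s j)) *
        (gfun (y (tval s)) - gstar + 2^-1 * D (y (tval s)))
    <= (1 - 4 * alpha / (N%:R * norm1inf F (theta F P) + 2)) ^+ k *
       (gfun (y [::]) - gstar + 2^-1 * D (y [::])).
Proof.
move=> Npos nRpos Fsub F0 Finc Pprop flov xopt gmin Dmin y0B yproj ystay.
have yBall : forall s, in_Bprod F (y s).
  by elim/last_ind => // s C IH; exact: (yB_step yproj ystay C IH).
have PZ := phi_zero_N1 Npos Fsub F0 Finc Pprop flov xopt gmin Dmin.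
have [N1|N2] : N = 1%N \/ (1 < N)%N by case: (ltnP 1 N) => h; [right | left; apply/eqP; rewrite eqn_leq h Npos].
  move=> k; rewrite PZ // mulr0 big1 // => s _; rewrite PZ ?mulr0 //.
have OS := one_step Npos Fsub F0 Finc Pprop flov xopt gmin Dmin yproj ystay.
set rho := 1 - 4 * alpha / (N%:R * norm1inf F (theta F P) + 2).
have rho0 : 0 <= rho.
  have NN : 2 <= N%:R :> K by rewrite ler_nat.
  have hN := norm1inf_ge Finc Pprop.
  have M4 : 4 <= N%:R * norm1inf F (theta F P).
    have : 2 * 2 <= N%:R * norm1inf F (theta F P) by apply: ler_pM => //; lra.
    lra.
  have a1 : alpha < 1 by case: Pprop => /andP[].
  rewrite /rho subr_ge0 ler_pdivrMr; last by lra.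
  lra.
have Pge0 : forall C, 0 <= P C by case: Pprop.
set Phi := fun v => gfun v - gstar + 2^-1 * D v.
have E : forall k, \sum_(s : k.-tuple {set 'I_nR}) (\prod_(j < k) P (tnth s j)) * Phi (y (tval s))
   = \sum_(s : k.-tuple {set 'I_nR}) (\prod_(C <- s) P C) * Phi (y s).
  by move=> k; apply: eq_bigr => s _; rewrite big_tuple.
move=> k; rewrite -/(Phi _) (E k).
elim: k => [|k IH].
  rewrite expr0 mul1r.
  have -> : \sum_(s : 0.-tuple {set 'I_nR}) (\prod_(C <- s) P C) * Phi (y s) =
            \sum_(s : 0.-tuple {set 'I_nR}) Phi (y [::]).
    by apply: eq_bigr => s _; rewrite (tuple0 s) big_nil mul1r.
  by rewrite sumr_const card_tuple expn0.
rewrite (@sum_tuple_rcons _ _ k (fun s => (\prod_(C <- s) P C) * Phi (y s))).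
apply: (@le_trans _ _ (\sum_(s : k.-tuple {set 'I_nR}) (\prod_(C <- s) P C) * (rho * Phi (y s)))).
  apply: ler_sum => s _.
  have -> : \sum_C (\prod_(C0 <- rcons s C) P C0) * Phi (y (rcons s C)) =
      (\prod_(C <- s) P C) * \sum_C P C * Phi (y (rcons s C)).
    rewrite mulr_sumr; apply: eq_bigr => C _.
    by rewrite -cats1 big_cat big_seq1 /=; ring.
  apply: ler_wpM2l; first by apply: prodr_ge0.
  exact: OS (yBall s).
rewrite (eq_bigr (fun s : k.-tuple _ => rho * ((\prod_(C <- s) P C) * Phi (y s)))); last first.
  by move=> s _; ring.
rewrite -mulr_sumr exprS -mulrA; exact: ler_wpM2l.
Qed.
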